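(* Let $G$ be a finite group, $p$ a prime, $k$ a $p$-adic field, and $G_1\le G$ a subgroup containing a $p$-Sylow subgroup of $G$ which is realizable over $k$. Let $l/k$ be a finite extension with $\gcd([l:k],p)=1$. Then there is a subgroup $G_2\le G_1$ which contains a $p$-Sylow subgroup of $G$ and is realizable over $l$.
   Context: A $p$-adic field is a finite extension of $\mathbb{Q}_p$. A finite group is realizable over a field $F$ if it is isomorphic to the Galois group of some Galois extension of $F$. *)

(* Defs.v *)
From HB Require Import structures.
From mathcomp Require Import all_boot all_order all_algebra all_fingroup all_solvable all_field.
Set Implicit Arguments. Unset Strict Implicit. Unset Printing Implicit Defensive.
Import Order.TTheory GRing.Theory Num.Theory.
Local Open Scope ring_scope.

(* p-adic absolute value on rat: |q|_p = p^(-v_p(q)), |0|_p = 0. *)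
Definition padic_abs (p : nat) (q : rat) : rat :=
  if q == 0 then 0
  else (p%:R ^+ logn p (absz (denq q))) / (p%:R ^+ logn p (absz (numq q))).

(* K (with embedding emb of Q and norm nrm) is the completion of Q with
   respect to the p-adic absolute value, i.e. K is (a model of) Q_p.
   The norm takes values in p^Z u {0} (a subset of Q), so rat values suffice. *)
Record is_Qp (p : nat) (K : fieldType) := IsQp {
  Qp_emb : {rmorphism rat -> K};
  Qp_nrm : K -> rat;
  Qp_nrm_ge0 : forall x, 0 <= Qp_nrm x;
  Qp_nrm_eq0 : forall x, (Qp_nrm x == 0) = (x == 0);
  Qp_nrmM : forall x y, Qp_nrm (x * y) = Qp_nrm x * Qp_nrm y;
  Qp_nrmD : forall x y, Qp_nrm (x + y) <= Num.max (Qp_nrm x) (Qp_nrm y);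
  Qp_nrm_emb : forall q, Qp_nrm (Qp_emb q) = padic_abs p q;
  Qp_dense : forall x (e : rat), 0 < e -> exists q, Qp_nrm (x - Qp_emb q) < e;
  Qp_complete : forall u : nat -> K,
    (forall e : rat, 0 < e -> exists N, forall m n, (N <= m)%N -> (N <= n)%N ->
        Qp_nrm (u m - u n) < e) ->
    exists x, forall e : rat, 0 < e -> exists N, forall n, (N <= n)%N ->
        Qp_nrm (u n - x) < e
}.

Definition realizable (F : fieldType) (gT : finGroupType) (H : {set gT}) : Prop :=
  exists M : splittingFieldType F,
    galois 1%AS {:M} /\ (H \isog 'Gal({:M} / 1%AS))%g.

Definition contains_sylow (gT : finGroupType) (p : nat) (G H : {set gT}) : Prop :=
  exists P : {group gT}, (p.-Sylow(G) P && (P \subset H))%g.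

(* Main.v *)
Require Import Defs.
From HB Require Import structures.
From mathcomp Require Import all_boot all_order all_algebra all_fingroup all_solvable all_field.
From Stdlib Require Import Classical.
Set Implicit Arguments. Unset Strict Implicit. Unset Printing Implicit Defensive.
Import GRing.Theory.
Module M_p1.
Local Open Scope ring_scope.

Lemma irr_factor_exists (F : fieldType) (p : {poly F}) :
  (1 < size p)%N -> exists2 q : {poly F}, irreducible_poly q & q %| p.
Proof.
have [n] : exists n, (size p <= n)%N by exists (size p).
elim: n p => [|n IH] p.
  by rewrite leqn0 => /eqP ->.
move=> szp p_gt1.
case: (classic (irreducible_poly p)) => [irr|nirr]; first by exists p.
have : ~ (forall q : {poly F}, size q != 1%N -> q %| p -> q %= p).
  by move=> H; apply: nirr; split.
move/not_all_ex_not => [q].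
move=> H0; have [sq H] := imply_to_and _ _ H0; have [qp nqp] := imply_to_and _ _ H.
have p0 : p != 0 by rewrite -size_poly_eq0 -(ltn_predK p_gt1).
have q0 : q != 0 by apply: contraNneq p0 => q0; move: qp; rewrite q0 dvd0p.
have q_gt1 : (1 < size q)%N.
  by move: sq; rewrite -size_poly_eq0 in q0; case: (size q) q0 => [|[|]].
have ltqp : (size q < size p)%N.
  rewrite ltn_neqAle dvdp_leq // andbT (dvdp_size_eqp qp).
  by apply/negP => /nqp.
have [r ir rq] := IH q (leq_trans ltqp szp) q_gt1.
by exists r => //; apply: dvdp_trans qp.
Qed.

End M_p1.
Import M_p1.

Module M_p2.
Local Open Scope ring_scope.

Section One.
Variables (k : fieldType) (l : fieldExtType k) (M : splittingFieldType k).
Variable th : M.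
Hypothesis eqth : <<1; th>>%VS = fullv.
Variable f : {poly k}.
Hypothesis fM : map_poly (in_alg M) f = minPoly 1 th.
Variable rs : seq M.
Hypothesis f_split : minPoly 1 th = \prod_(y <- rs) ('X - y%:P).
Variable L : fieldExtType l.
Variable z : L.
Hypothesis eqz : <<1; z>>%VS = fullv.
Definition iL : {rmorphism k -> L} := (in_alg L \o in_alg l)%FUN.
Hypothesis fz : root (map_poly iL f) z.

Definition ev (q : {poly k}) : L := (map_poly iL q).[z].

Lemma evM q1 q2 : ev (q1 * q2) = ev q1 * ev q2.
Proof. by rewrite /ev rmorphM hornerM. Qed.
Lemma evB q1 q2 : ev (q1 - q2) = ev q1 - ev q2.
Proof. by rewrite /ev rmorphB hornerD hornerN. Qed.
Lemma evD q1 q2 : ev (q1 + q2) = ev q1 + ev q2.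
Proof. by rewrite /ev rmorphD hornerD. Qed.
Lemma evC c : ev c%:P = iL c.
Proof. by rewrite /ev map_polyC hornerC. Qed.
Lemma evX : ev 'X = z.
Proof. by rewrite /ev map_polyX hornerX. Qed.
Lemma ev_f : ev f = 0.
Proof. exact/rootP. Qed.

Lemma ev_dvd q : f %| q -> ev q = 0.
Proof. by move/dvdpP => [e ->]; rewrite evM ev_f mulr0. Qed.

Lemma f_irr d : d %| f -> (d %= f) || (d %= 1).
Proof.
move=> df.
have := @minPoly_irr _ _ 1%VS th (map_poly (in_alg M) d) (alg_polyOver _ _).
rewrite -fM dvdp_map => /(_ df).
have h1 : map_poly (in_alg M) 1 = 1 by rewrite -polyC1 map_polyC /= scale1r.
by rewrite eqp_map -{1}h1 eqp_map.
Qed.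

Lemma f_neq0 : f != 0.
Proof.
apply: contraTneq (monic_minPoly 1%VS th) => f0.
by rewrite -fM f0 map_poly0 monicE lead_coef0 eq_sym oner_eq0.
Qed.

Lemma ev_eq0 q : ev q = 0 -> f %| q.
Proof.
move=> evq.
have := f_irr (dvdp_gcdl f q); case/orP => [Hf|H1].
  by rewrite -(eqp_dvdl _ Hf) dvdp_gcdr.
have : coprimep f q by rewrite /coprimep size_poly_eq1.
case/Bezout_eq1_coprimepP => [[u v]] /= /(congr1 ev).
rewrite evD !evM ev_f evq !mulr0 addr0 -polyC1 evC rmorph1 => /eqP.
by rewrite eq_sym oner_eq0.
Qed.

Lemma exP (x : M) : exists q : {poly k}, x == (map_poly (in_alg M) q).[th].
Proof.
have /Fadjoin1_polyP [q ->] : x \in <<1; th>>%VS by rewrite eqth memvf.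
by exists q.
Qed.

Definition polyOf (x : M) : {poly k} := xchoose (exP x).
Lemma polyOfK x : (map_poly (in_alg M) (polyOf x)).[th] = x.
Proof. by rewrite -(eqP (xchooseP (exP x))). Qed.

Definition rho (x : M) : L := ev (polyOf x).

Lemma rhoE q : rho ((map_poly (in_alg M) q).[th]) = ev q.
Proof.
rewrite /rho; set q' := polyOf _.
have Hq : (map_poly (in_alg M) q').[th] = (map_poly (in_alg M) q).[th] by rewrite polyOfK.
apply/eqP; rewrite -subr_eq0 -evB; apply/eqP/ev_dvd.
rewrite -(dvdp_map (in_alg M)) fM; apply: minPoly_dvdp; first exact: alg_polyOver.
by rewrite /root rmorphB hornerD hornerN Hq subrr.
Qed.

Lemma rho_ev x : rho x = ev (polyOf x).
Proof. by []. Qed.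

Lemma rhoD x y : rho (x + y) = rho x + rho y.
Proof.
by rewrite -{1}(polyOfK x) -{1}(polyOfK y) -hornerD -rmorphD rhoE evD.
Qed.
Lemma rhoM x y : rho (x * y) = rho x * rho y.
Proof.
by rewrite -{1}(polyOfK x) -{1}(polyOfK y) -hornerM -rmorphM rhoE evM.
Qed.
Lemma rho_alg c : rho (in_alg M c) = iL c.
Proof.
by rewrite -evC -rhoE map_polyC hornerC.
Qed.
Lemma rho1 : rho 1 = 1.
Proof. by rewrite -(scale1r (1 : M)) -/(in_alg M 1) rho_alg rmorph1. Qed.
Lemma rho_th : rho th = z.
Proof. by rewrite -evX -rhoE map_polyX hornerX. Qed.

Lemma rho_inj : injective rho.
Proof.
move=> x y; rewrite -(polyOfK x) -(polyOfK y) !rhoE => /eqP.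
rewrite -subr_eq0 -evB => /eqP/ev_eq0 /dvdpP [e He].
apply/eqP; rewrite -subr_eq0 -hornerN -hornerD -rmorphB He.
have fth : (map_poly (in_alg M) f).[th] = 0 by rewrite fM minPolyxx.
by rewrite rmorphM hornerM fth mulr0.
Qed.

Lemma rhoB x y : rho (x - y) = rho x - rho y.
Proof.
rewrite -{1}(polyOfK x) -{1}(polyOfK y) -hornerN -hornerD -rmorphB rhoE evB.
by [].
Qed.

Definition rhoR : {rmorphism M -> L} :=
  HB.pack rho (GRing.isZmodMorphism.Build _ _ rho rhoB)
     (GRing.isMonoidMorphism.Build _ _ rho (conj rho1 rhoM : monoid_morphism rho)).

Lemma rhoRE x : rhoR x = rho x. Proof. by []. Qed.

Lemma map_rho_alg q : map_poly rhoR (map_poly (in_alg M) q) = map_poly iL q.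
Proof.
rewrite -map_poly_comp; apply: eq_map_poly => c /=; exact: rho_alg.
Qed.

Lemma fL_split : map_poly iL f = \prod_(y <- rs) ('X - (rho y)%:P).
Proof.
rewrite -map_rho_alg fM f_split rmorph_prod; apply: eq_bigr => y _.
by rewrite -[LHS]/(map_poly rhoR ('X - y%:P)) map_polyXsubC.
Qed.

Lemma th_in_rs : th \in rs.
Proof. by rewrite -root_prod_XsubC -f_split root_minPoly. Qed.

Lemma L_splitting_axiom : splitting_field_axiom L.
Proof.
exists (map_poly iL f).
  by rewrite /iL map_poly_comp alg_polyOver.
exists (map rho rs); first by rewrite fL_split big_map eqpxx.
apply/eqP; rewrite eqEsubv subvf /= -eqz sub_adjoin1v.
by apply: seqv_sub_adjoin; rewrite -rho_th map_f // th_in_rs.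
Qed.

End One.

End M_p2.
Import M_p2.

Module M_p3.
Local Open Scope ring_scope.

Section Gen.
Variables (F : fieldType) (E : splittingFieldType F).

Lemma gal_alg (x : gal_of {:E}) c : x (in_alg E c) = in_alg E c.
Proof. by rewrite /= linearZ /= rmorph1. Qed.

Lemma gal_map_alg (x : gal_of {:E}) q :
  map_poly x (map_poly (in_alg E) q) = map_poly (in_alg E) q.
Proof. by rewrite -map_poly_comp; apply: eq_map_poly => c /=; apply: gal_alg. Qed.

Lemma gal_horner_alg (x : gal_of {:E}) q a :
  x ((map_poly (in_alg E) q).[a]) = (map_poly (in_alg E) q).[x a].
Proof. by rewrite -horner_map gal_map_alg. Qed.

Lemma gal_gen_eq (a : E) : <<1; a>>%VS = fullv ->
  forall x y : gal_of {:E}, x a = y a -> x = y.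
Proof.
move=> eqa x y xy; apply/eqP/gal_eqP => v _.
have /Fadjoin1_polyP [q ->] : v \in <<1; a>>%VS by rewrite eqa memvf.
by rewrite !gal_horner_alg xy.
Qed.

Lemma gal_in1 (x : gal_of {:E}) : x \in ('Gal({:E} / 1))%g.
Proof. by rewrite gal_kHom ?sub1v // k1AHom. Qed.
End Gen.

End M_p3.
Import M_p3.

Module M_p4.
Local Open Scope ring_scope.

Section Two.
Variables (k : fieldType) (l : fieldExtType k) (M : splittingFieldType k).
Variable th : M.
Hypothesis eqth : <<1; th>>%VS = fullv.
Variable f : {poly k}.
Hypothesis fM : map_poly (in_alg M) f = minPoly 1 th.
Variable rs : seq M.
Hypothesis f_split : minPoly 1 th = \prod_(y <- rs) ('X - y%:P).
Hypothesis normM : normalField 1 {:M}.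
Variable L : splittingFieldType l.
Variable z : L.
Hypothesis eqz : <<1; z>>%VS = fullv.
Hypothesis fz : root (map_poly (iL L) f) z.

Local Notation rho := (@M_p2.rho _ _ _ _ eqth L z).


Lemma galL_iL (s : gal_of {:L}) c : s (iL L c) = iL L c.
Proof. exact: gal_alg. Qed.

Lemma galL_map (s : gal_of {:L}) q : map_poly s (map_poly (iL L) q) = map_poly (iL L) q.
Proof. by rewrite /iL map_poly_comp gal_map_alg. Qed.

Lemma intertwine (t : gal_of {:M}) (s : gal_of {:L}) :
  rho (t th) = s z -> forall x, rho (t x) = s (rho x).
Proof.
move=> Hts x; rewrite -(polyOfK eqth x) gal_horner_alg.
rewrite -(rhoRE eqth fM fz) -horner_map /= (map_rho_alg eqth fM fz) Hts.
by rewrite (rhoE eqth fM fz) -horner_map galL_map.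
Qed.

Lemma Phi_ex (s : gal_of {:L}) : exists t : gal_of {:M}, rho (t th) == s z.
Proof.
have : root (map_poly (iL L) f) (s z).
  by rewrite -(galL_map s f) /root horner_map (rootP fz) rmorph0.
rewrite (fL_split eqth fM f_split fz) -(big_map rho xpredT (fun a => ('X - a%:P))) root_prod_XsubC => /mapP [y yrs ->].
have /normalField_root_minPoly : root (minPoly 1 th) y.
  by rewrite f_split root_prod_XsubC.
case/(_ _ (sub1v _) normM (memvf _)) => t _ <-.
by exists t.
Qed.

Definition Phi (s : gal_of {:L}) : gal_of {:M} := xchoose (Phi_ex s).

Lemma PhiP s : rho (Phi s th) = s z.
Proof. exact/eqP/(xchooseP (Phi_ex s)). Qed.

Lemma PhiM : {morph Phi : s1 s2 / (s1 * s2)%g}.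
Proof.
move=> s1 s2; apply: (gal_gen_eq eqth); apply: (rho_inj fM fz).
rewrite PhiP !galM ?memvf // (intertwine (PhiP s2)).
by rewrite PhiP.
Qed.

Lemma Phi_inj : injective Phi.
Proof.
move=> s1 s2 H; apply: (gal_gen_eq eqz).
by rewrite -!PhiP H.
Qed.

Lemma rho_uniq : uniq rs -> uniq (map rho rs).
Proof. by move=> u; rewrite map_inj_uniq //; exact: (rho_inj fM fz). Qed.


Lemma galL : uniq rs -> galois 1 {:L}.
Proof.
move=> urs; apply/splitting_galoisField; exists (map_poly (iL L) f); split.
- by rewrite /iL map_poly_comp alg_polyOver.
- rewrite (fL_split eqth fM f_split fz) -(big_map rho xpredT (fun a => ('X - a%:P))).
  by rewrite separable_prod_XsubC rho_uniq.
exists (map rho rs).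
  by rewrite (fL_split eqth fM f_split fz) big_map eqpxx.
apply/eqP; rewrite eqEsubv subvf /= -eqz sub_adjoin1v.
apply: seqv_sub_adjoin; rewrite -{1}(rho_th eqth fM fz) map_f //.
exact: (th_in_rs f_split).
Qed.
End Two.

End M_p4.
Import M_p4.

Module M_p5.
Local Open Scope ring_scope.

Section Three.
Variables (k : fieldType) (l : fieldExtType k) (L : fieldExtType l).

Lemma dim_base : \dim {:baseFieldType L} = (\dim {:L} * \dim {:l})%N.
Proof.
have <- := dim_baseVspace (fullv : {vspace L}).
suff -> : baseVspace (fullv : {vspace L}) = fullv by [].
apply/vspaceP => x.
have H := mem_baseVspace (fullv : {vspace L}) x.
have -> : (x \in (fullv : {vspace baseFieldType L})) = true by apply: memvf.
rewrite H. apply: (@memvf _ L).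
Qed.

Lemma base_alg c : in_alg (baseFieldType L) c = iL L c.
Proof. by rewrite /= baseField_scaleE. Qed.

Lemma base_horner (q : {poly k}) (x : L) :
  (map_poly (in_alg (baseFieldType L)) q).[x : baseFieldType L] = (map_poly (iL L) q).[x].
Proof.
elim/poly_ind: q => [|q c IH]; first by rewrite !rmorph0 !horner0.
rewrite !rmorphD !rmorphM /= !map_polyX !map_polyC !hornerMXaddC IH.
by [].
Qed.

Variables (M : splittingFieldType k) (th : M).
Hypothesis eqth : <<1; th>>%VS = fullv.
Variable f : {poly k}.
Hypothesis fM : map_poly (in_alg M) f = minPoly 1 th.
Variable z : L.
Hypothesis fz : root (map_poly (iL L) f) z.

Lemma dimM_size : \dim {:M} = (size f).-1.
Proof.
rewrite -eqth dim_Fadjoin dimv1 muln1 -[adjoin_degree _ _]/((adjoin_degree 1 th).+1.-1).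
by rewrite -size_minPoly -fM size_map_poly.
Qed.

Lemma dim_divides : (\dim {:M} %| \dim {:L} * \dim {:l})%N.
Proof.
rewrite -dim_base dimM_size.
pose z0 : baseFieldType L := z.
have /polyOver1P [q Dq] := minPolyOver 1 z0.
have sq : size (minPoly 1 z0) = size q by rewrite Dq size_map_poly.
have evq : ev z q = 0.
  by rewrite /ev -base_horner -Dq minPolyxx.
have fq := ev_eq0 fM fz evq.
have q0 : q != 0.
  by rewrite -size_poly_eq0 -sq size_poly_eq0 monic_neq0 // monic_minPoly.
have le1 : (size f <= size q)%N by apply: dvdp_leq.
have le2 : (size q <= size f)%N.
  rewrite -sq -(size_map_poly (in_alg (baseFieldType L)) f).
  apply: dvdp_leq.
    by rewrite map_poly_eq0 (f_neq0 fM).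
  apply: minPoly_dvdp; first exact: alg_polyOver.
  by rewrite /root base_horner (rootP fz).
have -> : (size f).-1 = \dim <<1; z0>>%VS.
  rewrite dim_Fadjoin dimv1 muln1 -[adjoin_degree _ _]/((adjoin_degree 1 z0).+1.-1).
  by rewrite -size_minPoly sq; congr (_.-1); apply/eqP; rewrite eqn_leq le1 le2.
exact: field_dimS (subvf _).
Qed.
End Three.

End M_p5.
Import M_p5.

Local Open Scope ring_scope.

Theorem lemma5p1 (gT : finGroupType) (G G1 : {group gT}) (p : nat)
  (Qp : fieldType) (Qp_struct : is_Qp p Qp) (k : fieldExtType Qp)
  (l : fieldExtType k) :
  prime p ->
  (G1 \subset G)%g ->
  contains_sylow p G G1 ->
  realizable k G1 ->
  coprime (\dim {:l}) p ->
  exists G2 : {group gT},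
    (G2 \subset G1)%g /\ contains_sylow p G G2 /\ realizable l G2.
Proof.
move=> pr_p sG1G [P /andP [sylP sPG1]] [M [galM isoG1]] cop.
have /and3P [_ sepM normM] := galM.
set th := separable_generator 1 {:M}.
have eqth : <<1; th>>%VS = fullv.
  by rewrite /th -(eq_adjoin_separable_generator sepM (sub1v _)).
have /polyOver1P [f fM'] := minPolyOver 1 th.
have fM := esym fM'.
have [r _ splitr] := normalField_factors (sub1v _) normM th (memvf _).
set rs := map (fun x : gal_of {:M} => x th) r.
have f_split : minPoly 1 th = \prod_(y <- rs) ('X - y%:P)%R.
  by rewrite splitr big_map.
have urs : uniq rs.
  by rewrite -separable_prod_XsubC -f_split; apply: separable_generatorP.
have szf : (1 < size f)%N.
  have := adim_gt0 (fullv : {aspace M}).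
  by rewrite (dimM_size eqth fM); case: (size f) => [|[|]].
have szfl : (1 < size (map_poly (in_alg l) f))%N by rewrite size_map_poly.
have [g irrg gf] := irr_factor_exists szfl.
have [L _ [z rootz eqz]] := irredp_FAdjoin irrg.
have fz : root (map_poly (iL L) f) z.
  apply: root_dvdp rootz.
  by rewrite /iL map_poly_comp dvdp_map.
pose LS : splittingFieldType l := HB.pack L
  (FieldExt_isSplittingField.Build l L (L_splitting_axiom eqth fM f_split eqz fz)).
have fzS : root (map_poly (iL LS) f) (z : LS) by [].
have eqzS : <<1; (z : LS)>>%VS = fullv by [].
have galLS : galois 1 {:LS} := galL eqth fM f_split eqzS fzS urs.
pose Ph := Phi eqth fM f_split normM fzS.
have PhM : {in 'Gal({:LS} / 1)%g &, {morph Ph : x y / (x * y)%g}}.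
  by move=> x y _ _; apply: PhiM.
pose PhMor := Morphism PhM.
have injPh : ('injm PhMor)%g.
  by apply/injmP => x y _ _; apply: (Phi_inj eqzS).
have [iso injiso imiso] := isogP isoG1.
set R := (PhMor @* 'Gal({:LS} / 1))%g.
have sRim : R \subset (iso @* G1)%g.
  by rewrite imiso; apply/subsetP => x _; apply: gal_in1.
exists (iso @*^-1 R)%G.
have sG2G1 : (iso @*^-1 R \subset G1)%g by apply: subsetIl.
have isoG2 : (iso @*^-1 R)%g \isog 'Gal({:LS} / 1)%g.
  apply: isog_trans (sub_isog sG2G1 injiso) _.
  have E : (iso @* (iso @*^-1 R))%G = (PhMor @* 'Gal({:LS} / 1))%G.
    by apply: val_inj; rewrite /= morphpreK.
  rewrite E isog_sym; exact: sub_isog (subxx _) injPh.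
split => //; split; last by exists LS.
set G2 := (iso @*^-1 R)%G.
have cG2 : #|G2| = \dim {:L}.
  by rewrite (card_isog isoG2) -(galois_dim galLS) dimv1 divn1.
have cG1 : #|G1| = \dim {:M}.
  by rewrite (card_isog isoG1) -(galois_dim galM) dimv1 divn1.
have hdiv := dim_divides eqth fM fzS.
set e := logn p #|G|.
have ePG : #|P| = (p ^ e)%N by have /pHallP [_ ->] := sylP; rewrite p_part.
have dvd1 : (p ^ e %| #|G1|)%N by rewrite -ePG cardSg.
have dvd2 : (p ^ e %| \dim {:L})%N.
  have copl : coprime (p ^ e) (\dim {:l}) by rewrite coprimeXl // coprime_sym.
  rewrite -(Gauss_dvdl _ copl); apply: dvdn_trans hdiv.
  by rewrite -cG1.
have logG2 : logn p #|G2| = e.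
  apply/eqP; rewrite eqn_leq; apply/andP; split.
    apply: dvdn_leq_log; first exact: cardG_gt0.
    by apply: cardSg; apply: subset_trans sG2G1 sG1G.
  by rewrite -pfactor_dvdn ?cardG_gt0 // cG2.
have [S sylS] := Sylow_exists p G2.
exists S; apply/andP; split; last exact: pHall_sub sylS.
have /pHallP [sSG2 cS] := sylS.
apply/pHallP; split.
  by apply: subset_trans sSG2 (subset_trans sG2G1 sG1G).
by rewrite cS !p_part logG2.
Qed.
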